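(* Fix $n\ge1$. For $\theta>0$ let $X_{1,n}$ be a random variable on $\{1,\dots,n\}$ with $$P\{X_{1,n}=k\}=\frac\theta n\,\frac{n!}{(n-k)!}\,\frac{\Gamma(\theta+n-k)}{\Gamma(\theta+n)},\quad k=1,\dots,n.$$ Then, as $\theta\to\infty$, the family of laws of $X_{1,n}$ satisfies an LDP on $\{1,\dots,n\}$ with speed $\log\theta$ and rate function $I(k)=k-1$.
   Context: $X_{1,n}$ is the size of the first (oldest) age class in a random sample of size $n$ from a $PD(\theta)$ population; the displayed formula is its law. An LDP with speed $\log\theta$ uses normalization $(\log\theta)^{-1}\log$ as $\theta\to\infty$. *)

(* Defs.v *)
From Stdlib Require Import Reals Lra Lia Arith Factorial.
From Coquelicot Require Import Coquelicot.
Open Scope R_scope.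

Definition Gamma (x : R) : R :=
  RInt_gen (fun t => Rpower t (x - 1) * exp (- t)) (at_right 0) (Rbar_locally p_infty).

Definition law_X1n (n : nat) (theta : R) (k : nat) : R :=
  theta / INR n * (INR (Factorial.fact n) / INR (Factorial.fact (n - k)))
  * (Gamma (theta + INR n - INR k) / Gamma (theta + INR n)).

Definition in_range (n k : nat) : bool := andb (Nat.leb 1 k) (Nat.leb k n).

Definition mass (n : nat) (mu : nat -> R) (A : nat -> bool) : R :=
  sum_f_R0 (fun k => if andb (in_range n k) (A k) then mu k else 0) n.

(* infimum of I over A ∩ {1..n} (an extended real, +oo if empty) *)
Definition inf_over (n : nat) (I : nat -> R) (A : nat -> bool) : Rbar :=
  Glb_Rbar (fun x => exists k, in_range n k = true /\ A k = true /\ x = I k).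

Definition eventually_large (P : R -> Prop) : Prop :=
  exists T : R, forall theta, T < theta -> P theta.

(* Large deviation principle, as theta -> +oo, for the family of laws
   (mu theta) on the finite set {1..n} with the discrete topology (every subset
   is open and closed, every function is lower semicontinuous and every level
   set is compact), with speed s(theta) and rate function I:
     limsup  s(theta)^-1 log mu_theta(A) <= - inf_A I   (A closed)
     liminf  s(theta)^-1 log mu_theta(A) >= - inf_A I   (A open).
   For A ∩ {1..n} empty both bounds are trivial (log 0 = -oo, inf = +oo),
   so they are required for nonempty A only; the limsup/liminf bounds are
   written in their epsilon form (the bound -inf_A I is then finite). *)
Definition LDP_finite (n : nat) (mu : R -> nat -> R) (speed : R -> R)
    (I : nat -> R) : Prop :=
  (forall k, in_range n k = true -> 0 <= I k) /\
  forall A : nat -> bool,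
    (exists k, in_range n k = true /\ A k = true) ->
    forall eps, 0 < eps ->
      eventually_large (fun theta =>
        Rbar_le (ln (mass n (mu theta) A) / speed theta)
                (Rbar_plus (Rbar_opp (inf_over n I A)) eps))
   /\ eventually_large (fun theta =>
        Rbar_le (Rbar_minus (Rbar_opp (inf_over n I A)) eps)
                (ln (mass n (mu theta) A) / speed theta)).

(* Main.v *)
Require Import Defs.
From Stdlib Require Import Reals Lra Lia Arith Factorial Classical.
From Coquelicot Require Import Coquelicot.
Open Scope R_scope.


Definition fg (x : R) := fun t => Rpower t (x - 1) * exp (- t).

Lemma Rpow_derive p t : 0 < t -> is_derive (fun t => Rpower t p) t (p * Rpower t (p-1)).
Proof. intros; apply is_derive_Reals; apply derivable_pt_lim_power; auto. Qed.

Lemma fg_cont x t : 0 < t -> continuous (fg x) t.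
Proof.
  intros Ht. apply (@ex_derive_continuous R_AbsRing R_NormedModule). unfold fg.
  apply ex_derive_mult.
  - eexists; apply Rpow_derive; auto.
  - auto_derive; auto.
Qed.

Lemma fg_pos x t : 0 < t -> 0 < fg x t.
Proof. intros; unfold fg, Rpower. apply Rmult_lt_0_compat; apply exp_pos. Qed.

Lemma fg_ex x a b : 0 < a -> 0 < b -> ex_RInt (fg x) a b.
Proof.
  intros Ha Hb. apply (@ex_RInt_continuous R_CompleteNormedModule). intros z Hz. apply fg_cont.
  assert (0 < Rmin a b) by (apply Rmin_glb_lt; auto). lra.
Qed.

Lemma exp_le x y : x <= y -> exp x <= exp y.
Proof. intros [H|H]; [left; apply exp_increasing; auto| subst; lra]. Qed.

Lemma ln_le_aff q t : 0 < q -> 0 < t -> q * ln t <= t / 2 + q * (ln (2*q) - 1).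
Proof.
  intros Hq Ht.
  assert (H := exp_ineq1_le (ln (t / (2*q)))).
  rewrite exp_ln in H by (apply Rdiv_lt_0_compat; lra).
  rewrite ln_div in H by lra.
  assert (q * (1 + (ln t - ln (2*q))) <= q * (t / (2*q))) by (apply Rmult_le_compat_l; lra).
  replace (q * (t / (2*q))) with (t/2) in H0 by (field; lra). lra.
Qed.

Definition Kb (p : R) := exp ((p+1) * (ln (2*(p+1)) - 1)).

Lemma tail_bound p t : 0 <= p -> 1 <= t -> Rpower t p * exp (-t) <= Kb p * exp (- t / 2).
Proof.
  intros Hp Ht. unfold Rpower, Kb. rewrite <- !exp_plus. apply exp_le.
  assert (0 <= ln t) by (rewrite <- ln_1; apply ln_le; lra).
  assert (H1 := ln_le_aff (p+1) t ltac:(lra) ltac:(lra)).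
  assert (p * ln t <= (p+1) * ln t) by nra. lra.
Qed.

Lemma head_bound x a : 1 <= x -> 0 < a <= 1 -> RInt (fg x) a 1 <= 1.
Proof.
  intros Hx Ha.
  apply Rle_trans with (RInt (fun _ => 1) a 1).
  - apply RInt_le; try lra. apply fg_ex; lra. apply ex_RInt_const.
    intros t Ht. unfold fg, Rpower.
    assert (ln t <= 0) by (rewrite <- ln_1; apply ln_le; lra).
    assert (exp ((x-1) * ln t) <= 1) by (apply Rle_trans with (exp 0); [apply exp_le; nra | rewrite exp_0; lra]).
    assert (exp (-t) <= 1) by (apply Rle_trans with (exp 0); [apply exp_le; lra | rewrite exp_0; lra]).
    assert (0 < exp ((x-1) * ln t)) by apply exp_pos.
    assert (0 < exp (-t)) by apply exp_pos. nra.
  - rewrite RInt_const. unfold scal; simpl; unfold mult; simpl. lra.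
Qed.

Lemma tail_int K b : 1 <= b -> RInt (fun t => K * exp (- t / 2)) 1 b = K * (2 * exp (- (1) / 2) - 2 * exp (- b / 2)).
Proof.
  intros Hb.
  assert (H : is_RInt (V:=R_CompleteNormedModule) (fun t => K * exp (- t / 2)) 1 b
     (minus ((fun t => -2 * K * exp (- t / 2)) b) ((fun t => -2 * K * exp (- t / 2)) 1))).
  { apply (@is_RInt_derive R_CompleteNormedModule (fun t => -2 * K * exp (- t / 2)) (fun t => K * exp (- t / 2)) 1 b).
    - intros t _. auto_derive; auto. replace (exp (- t * / 2)) with (exp (- t / 2)) by reflexivity. field.
    - intros t _. apply (@ex_derive_continuous R_AbsRing R_NormedModule). auto_derive; auto. }
  apply is_RInt_unique in H. rewrite H. unfold minus, plus, opp; simpl. ring.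
Qed.

Lemma tail_bound_int x b : 1 <= x -> 1 <= b -> RInt (fg x) 1 b <= 2 * Kb (x-1).
Proof.
  intros Hx Hb.
  apply Rle_trans with (RInt (fun t => Kb (x-1) * exp (- t / 2)) 1 b).
  - apply RInt_le; try lra. apply fg_ex; lra.
    apply (@ex_RInt_continuous R_CompleteNormedModule). intros; apply (@ex_derive_continuous R_AbsRing R_NormedModule). auto_derive; auto.
    intros t Ht. apply tail_bound; lra.
  - rewrite tail_int by lra.
    assert (0 < Kb (x-1)) by apply exp_pos.
    assert (exp (- (1) / 2) <= 1) by (apply Rle_trans with (exp 0); [apply exp_le; lra | rewrite exp_0; lra]).
    assert (0 < exp (-b/2)) by apply exp_pos. nra.
Qed.

Lemma RInt_mono x a b a' b' : 0 < a' <= a -> a <= b -> b <= b' ->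
  RInt (fg x) a b <= RInt (fg x) a' b'.
Proof.
  intros Ha Hab Hb.
  rewrite <- (RInt_Chasles (fg x) a' a b') by (apply fg_ex; lra).
  rewrite <- (RInt_Chasles (fg x) a b b') by (apply fg_ex; lra).
  unfold plus; simpl.
  assert (0 <= RInt (fg x) a' a) by (apply RInt_ge_0; try lra; [apply fg_ex; lra| intros; left; apply fg_pos; lra]).
  assert (0 <= RInt (fg x) b b') by (apply RInt_ge_0; try lra; [apply fg_ex; lra| intros; left; apply fg_pos; lra]).
  lra.
Qed.

Lemma Gamma_exists x : 1 <= x -> exists L, 0 < L /\
  is_RInt_gen (fg x) (at_right 0) (Rbar_locally p_infty) L.
Proof.
  intros Hx.
  set (S := fun v => exists a b, 0 < a <= 1 /\ 1 <= b /\ v = RInt (fg x) a b).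
  assert (HB : bound S).
  { exists (1 + 2 * Kb (x-1)). intros v [a [b [Ha [Hb ->]]]].
    rewrite <- (RInt_Chasles (fg x) a 1 b) by (apply fg_ex; lra).
    unfold plus; simpl.
    assert (H1 := head_bound x a Hx Ha). assert (H2 := tail_bound_int x b Hx Hb). lra. }
  assert (HE : exists v, S v) by (exists (RInt (fg x) 1 2); exists 1, 2; repeat split; lra).
  destruct (completeness S HB HE) as [L [HL1 HL2]].
  assert (Hpos : 0 < RInt (fg x) 1 2).
  { apply RInt_gt_0; try lra. intros; apply fg_pos; lra. intros; apply fg_cont; lra. }
  exists L. split.
  { apply Rlt_le_trans with (RInt (fg x) 1 2); auto. apply HL1. exists 1, 2; repeat split; lra. }
  intros P [eps Heps].
  assert (Hv : exists v, S v /\ L - eps < v).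
  { apply Classical_Pred_Type.not_all_not_ex. intros Hn.
    assert (is_upper_bound S (L - eps)).
    { intros v Hv. destruct (Rle_dec v (L - eps)); auto. exfalso; apply (Hn v); split; auto; lra. }
    assert (L <= L - eps) by (apply HL2; auto). destruct eps; simpl in *; lra. }
  destruct Hv as [v [[a0 [b0 [Ha0 [Hb0 ->]]]] Hv]].
  apply Filter_prod with (fun a => 0 < a < a0) (fun b => b0 < b).
  - exists (mkposreal a0 ltac:(lra)). intros y Hy Hy0. split; auto.
    unfold ball in Hy; simpl in Hy; unfold AbsRing_ball, abs, minus, plus, opp in Hy; simpl in Hy.
    rewrite Rabs_right in Hy by lra. lra.
  - exists b0. auto.
  - intros a b Ha Hb. simpl. exists (RInt (fg x) a b). split.
    + apply (@RInt_correct R_CompleteNormedModule). apply fg_ex; lra.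
    + apply Heps.
      assert (RInt (fg x) a b <= L) by (apply HL1; exists a, b; repeat split; lra).
      assert (RInt (fg x) a0 b0 <= RInt (fg x) a b) by (apply RInt_mono; lra).
      unfold ball; simpl; unfold AbsRing_ball, abs, minus, plus, opp; simpl.
      rewrite Rabs_left1 by lra. destruct eps; simpl in *; lra.
Qed.

Definition gg (x : R) := fun t => Rpower t x * exp (- t).

Lemma gg_derive x t : 0 < t -> is_derive (gg x) t (x * fg x t - fg (x+1) t).
Proof.
  intros Ht. unfold gg, fg.
  replace (x + 1 - 1) with x by ring.
  replace (x * (Rpower t (x - 1) * exp (- t)) - Rpower t x * exp (- t))
    with ((x * Rpower t (x - 1)) * exp (- t) + Rpower t x * (-1 * exp (- t))) by ring.
  apply (is_derive_mult (fun t => Rpower t x) (fun t => exp (- t))).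
  - apply Rpow_derive; auto.
  - auto_derive; auto; try ring. intros; apply Rmult_comm.
Qed.

Lemma gg_lim0 x : 1 <= x -> filterlim (gg x) (at_right 0) (locally 0).
Proof.
  intros Hx. apply filterlim_locally. intros eps.
  exists (mkposreal (Rmin eps 1) ltac:(destruct eps; simpl; apply Rmin_glb_lt; lra)).
  intros y Hy Hy0.
  unfold ball in Hy; simpl in Hy; unfold AbsRing_ball, abs, minus, plus, opp in Hy; simpl in Hy.
  rewrite Rabs_right in Hy by lra.
  assert (y < eps) by (apply Rlt_le_trans with (Rmin eps 1); [lra| apply Rmin_l]).
  assert (y < 1) by (apply Rlt_le_trans with (Rmin eps 1); [lra| apply Rmin_r]).
  unfold ball; simpl; unfold AbsRing_ball, abs, minus, plus, opp; simpl.
  unfold gg, Rpower.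
  assert (ln y <= 0) by (rewrite <- ln_1; apply ln_le; lra).
  assert (exp (x * ln y) <= exp (ln y)) by (apply exp_le; nra).
  rewrite exp_ln in H2 by lra.
  assert (exp (-y) <= 1) by (apply Rle_trans with (exp 0); [apply exp_le; lra | rewrite exp_0; lra]).
  assert (0 < exp (x * ln y)) by apply exp_pos.
  assert (0 < exp (-y)) by apply exp_pos.
  rewrite Ropp_0, Rplus_0_r, Rabs_right by nra. nra.
Qed.

Lemma gg_liminf x : 1 <= x -> filterlim (gg x) (Rbar_locally p_infty) (locally 0).
Proof.
  intros Hx. apply filterlim_locally. intros [eps Heps]. simpl.
  set (K := Kb x).
  assert (HK : 0 < K) by apply exp_pos.
  exists (Rmax 1 (2 * K / eps)). intros t Ht.
  assert (H1 : 1 < t) by (apply Rle_lt_trans with (Rmax 1 (2 * K / eps)); [apply Rmax_l| lra]).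
  assert (H2 : 2 * K / eps < t) by (apply Rle_lt_trans with (Rmax 1 (2 * K / eps)); [apply Rmax_r| lra]).
  unfold ball; simpl; unfold AbsRing_ball, abs, minus, plus, opp; simpl.
  assert (Hb := tail_bound x t ltac:(lra) ltac:(lra)).
  fold K in Hb. unfold gg.
  assert (0 < Rpower t x * exp (- t)) by (unfold Rpower; apply Rmult_lt_0_compat; apply exp_pos).
  rewrite Ropp_0, Rplus_0_r, Rabs_right by lra.
  assert (Ee := exp_ineq1_le (t/2)).
  assert (exp (- t / 2) * exp (t / 2) = 1) by (rewrite <- exp_plus; replace (- t / 2 + t / 2) with 0 by field; apply exp_0).
  assert (2 * K < eps * t) by (apply Rmult_lt_compat_r with (r := eps) in H2; auto; unfold Rdiv in H2; rewrite Rmult_assoc, Rinv_l, Rmult_1_r in H2; lra).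
  assert (0 < exp (- t / 2)) by apply exp_pos.
  nra.
Qed.

Lemma pos_at_right : at_right 0 (fun a => 0 < a).
Proof. exists (mkposreal 1 Rlt_0_1). auto. Qed.

Lemma pos_at_infty : Rbar_locally p_infty (fun b => 0 < b).
Proof. exists 0. auto. Qed.

Lemma Gamma_rec x L : 1 <= x ->
  is_RInt_gen (fg x) (at_right 0) (Rbar_locally p_infty) L ->
  is_RInt_gen (fg (x+1)) (at_right 0) (Rbar_locally p_infty) (x * L).
Proof.
  intros Hx HL.
  assert (Dg : forall t, 0 < t -> Derive (gg x) t = x * fg x t - fg (x+1) t)
    by (intros; apply is_derive_unique, gg_derive; auto).
  assert (Hpos : filter_prod (at_right 0) (Rbar_locally p_infty)
            (fun ab => 0 < Rmin (fst ab) (snd ab))).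
  { apply Filter_prod with (fun a => 0 < a) (fun b => 0 < b).
    apply pos_at_right. apply pos_at_infty. intros a b Ha Hb; simpl; apply Rmin_glb_lt; auto. }
  assert (H1 : is_RInt_gen (Derive (gg x)) (at_right 0) (Rbar_locally p_infty) (0 - 0)).
  { apply is_RInt_gen_Derive.
    - eapply filter_imp; [|exact Hpos]. intros [a b] Hab t Ht; simpl in *.
      eexists; apply gg_derive; lra.
    - eapply filter_imp; [|exact Hpos]. intros [a b] Hab t Ht; simpl in *.
      assert (Ht0 : 0 < t) by lra.
      apply continuous_ext_loc with (fun y => minus (scal x (fg x y)) (fg (x+1) y)).
      + exists (mkposreal t Ht0). intros y Hy.
        unfold ball in Hy; simpl in Hy; unfold AbsRing_ball, abs, minus, plus, opp in Hy; simpl in Hy.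
        apply Rabs_def2 in Hy. rewrite Dg by lra. reflexivity.
      + apply (@continuous_minus R_UniformSpace R_AbsRing R_NormedModule).
        apply (@continuous_scal_r R_UniformSpace R_AbsRing R_NormedModule). apply fg_cont; auto.
        apply fg_cont; auto.
    - apply gg_lim0; auto.
    - apply gg_liminf; auto. }
  assert (H2 := is_RInt_gen_scal _ x _ HL).
  assert (H3 := is_RInt_gen_minus _ _ _ _ H2 H1).
  replace (x * L) with (minus (scal x L) (0 - 0)) by (unfold minus, plus, opp, scal; simpl; unfold mult; simpl; ring).
  eapply is_RInt_gen_ext; [|exact H3].
  eapply filter_imp; [|exact Hpos]. intros [a b] Hab t Ht; simpl in *.
  rewrite Dg by lra. unfold minus, plus, opp, scal; simpl; unfold mult; simpl. ring.
Qed.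

Lemma Gamma_val x L : is_RInt_gen (fg x) (at_right 0) (Rbar_locally p_infty) L -> Gamma x = L.
Proof. intros H. unfold Gamma. apply is_RInt_gen_unique. exact H. Qed.

Fixpoint pr (x : R) (j : nat) : R :=
  match j with O => 1 | S j' => pr x j' * (x + INR j') end.

Lemma Gamma_shift x : 1 <= x -> 0 < Gamma x /\ forall j, Gamma (x + INR j) = Gamma x * pr x j.
Proof.
  intros Hx. destruct (Gamma_exists x Hx) as [L [HL0 HL]].
  assert (Hj : forall j, is_RInt_gen (fg (x + INR j)) (at_right 0) (Rbar_locally p_infty) (L * pr x j)).
  { induction j.
    - simpl. replace (x + 0) with x by ring. replace (L * 1) with L by ring. exact HL.
    - rewrite S_INR. replace (x + (INR j + 1)) with ((x + INR j) + 1) by ring.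
      simpl. replace (L * (pr x j * (x + INR j))) with ((x + INR j) * (L * pr x j)) by ring.
      apply Gamma_rec; auto. assert (0 <= INR j) by apply pos_INR. lra. }
  rewrite (Gamma_val x L HL). split; auto.
  intros j. apply Gamma_val. apply Hj.
Qed.

Lemma pr_bounds th x k : 0 < th -> th <= x -> x + INR k <= 2 * th ->
  th ^ k <= pr x k <= (2 * th) ^ k.
Proof.
  intros Hth. induction k; intros H1 H2.
  - simpl. lra.
  - rewrite S_INR in H2. assert (0 <= INR k) by apply pos_INR.
    destruct IHk as [IH1 IH2]; auto; try lra.
    simpl.
    assert (0 <= th ^ k) by (apply pow_le; lra).
    split.
    + rewrite Rmult_comm. apply Rmult_le_compat; lra.
    + rewrite (Rmult_comm (2*th)). apply Rmult_le_compat; try lra.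
Qed.

Lemma fact_bounds n k : (k <= n)%nat -> 1 <= INR (fact n) / INR (fact (n - k)) <= INR (fact n).
Proof.
  intros Hk.
  assert (H1 : (1 <= fact (n - k))%nat) by (apply lt_O_fact).
  assert (H2 : (fact (n - k) <= fact n)%nat) by (apply fact_le; lia).
  apply le_INR in H1. apply le_INR in H2. simpl in H1.
  split.
  - apply (Rmult_le_reg_r (INR (fact (n-k)))); try lra. unfold Rdiv. rewrite Rmult_assoc, Rinv_l; lra.
  - apply (Rmult_le_reg_r (INR (fact (n-k)))); try lra. unfold Rdiv. rewrite Rmult_assoc, Rinv_l by lra.
    assert (0 <= INR (fact n)) by apply pos_INR. nra.
Qed.

Lemma law_bounds n th k : (1 <= n)%nat -> INR n <= th -> 1 <= th -> (1 <= k <= n)%nat ->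
  / (INR n * 2 ^ n) <= law_X1n n th k * th ^ (k - 1) <= INR (fact n).
Proof.
  intros Hn Hth1 Hth2 Hk.
  set (x := th + INR n - INR k).
  assert (Hkn : INR k <= INR n) by (apply le_INR; lia).
  assert (Hk1 : 1 <= INR k) by (apply (le_INR 1); lia).
  assert (Hn1 : 1 <= INR n) by (apply (le_INR 1); lia).
  assert (Hx : th <= x) by (unfold x; lra).
  destruct (Gamma_shift x ltac:(lra)) as [Gp Gs].
  assert (E : th + INR n = x + INR k) by (unfold x; ring).
  unfold law_X1n. fold x. rewrite E, Gs.
  destruct (pr_bounds th x k ltac:(lra) Hx ltac:(lra)) as [P1 P2].
  assert (Hp : 0 < th ^ k) by (apply pow_lt; lra).
  destruct (fact_bounds n k ltac:(lia)) as [F1 F2].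
  set (F := INR (fact n) / INR (fact (n - k))) in *.
  set (p := pr x k) in *.
  assert (Ek : th ^ k = th * th ^ (k - 1)) by (replace k with (S (k-1)) at 1 by lia; reflexivity).
  assert (EQ : th / INR n * F * (Gamma x / (Gamma x * p)) * th ^ (k - 1) = F / INR n * (th ^ k / p)).
  { rewrite Ek. field. repeat split; lra. }
  rewrite EQ.
  assert (Q1 : th ^ k / p <= 1).
  { apply (Rmult_le_reg_r p); try lra. unfold Rdiv. rewrite Rmult_assoc, Rinv_l; lra. }
  assert (Q2 : / 2 ^ n <= th ^ k / p).
  { rewrite Rpow_mult_distr in P2.
    assert (2 ^ k <= 2 ^ n) by (apply Rle_pow; lra || lia).
    assert (0 < 2 ^ k) by (apply pow_lt; lra).
    assert (0 < 2 ^ n) by (apply pow_lt; lra).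
    apply (Rmult_le_reg_r (2 ^ n * p)). nra.
    replace (/ 2 ^ n * (2 ^ n * p)) with p by (field; lra).
    replace (th ^ k / p * (2 ^ n * p)) with (th ^ k * 2 ^ n) by (field; lra).
    nra. }
  assert (0 < / 2 ^ n) by (apply Rinv_0_lt_compat, pow_lt; lra).
  split.
  - replace (/ (INR n * 2 ^ n)) with (1 / INR n * / 2 ^ n) by (field; split; [apply pow_nonzero|]; lra).
    apply Rmult_le_compat; try lra.
    + apply Rdiv_le_0_compat; lra.
    + unfold Rdiv. apply Rmult_le_compat_r; try lra. left; apply Rinv_0_lt_compat; lra.
  - assert (0 <= th ^ k / p) by lra.
    assert (F / INR n <= INR (fact n)).
    { apply (Rmult_le_reg_r (INR n)); try lra. unfold Rdiv. rewrite Rmult_assoc, Rinv_l by lra. nra. }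
    assert (0 <= F / INR n) by (apply Rdiv_le_0_compat; lra). nra.
Qed.

Lemma least_nat (P : nat -> bool) : forall B N, (N <= B)%nat -> P N = true ->
  exists m, P m = true /\ forall k, P k = true -> (m <= k)%nat.
Proof.
  induction B; intros N HN HP.
  - exists N. split; auto. intros; lia.
  - destruct (classic (exists k, (k <= B)%nat /\ P k = true)) as [[k [Hk Pk]]|Hno].
    + apply (IHB k); auto.
    + exists N. split; auto. intros k Pk. destruct (le_lt_dec N k); auto.
      exfalso. apply Hno. exists k. split; auto. lia.
Qed.

Lemma sum_le_const (f : nat -> R) M N : (forall k, (k <= N)%nat -> f k <= M) ->
  sum_f_R0 f N <= INR (S N) * M.
Proof.
  induction N; intros H.
  - simpl. specialize (H 0%nat ltac:(lia)). lra.
  - simpl sum_f_R0. rewrite S_INR.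
    assert (sum_f_R0 f N <= INR (S N) * M) by (apply IHN; intros; apply H; lia).
    specialize (H (S N) ltac:(lia)). lra.
Qed.

Lemma sum_ge_term (f : nat -> R) m N : (forall k, 0 <= f k) -> (m <= N)%nat ->
  f m <= sum_f_R0 f N.
Proof.
  intros Hf. induction N; intros Hm.
  - replace m with 0%nat by lia. simpl; lra.
  - simpl sum_f_R0. destruct (Nat.eq_dec m (S N)) as [->|Hne].
    + assert (0 <= sum_f_R0 f N).
      { clear IHN Hm. induction N; simpl; auto. specialize (Hf (S N)); lra. }
      lra.
    + specialize (IHN ltac:(lia)). specialize (Hf (S N)). lra.
Qed.

Lemma div_le a v L : 0 < L -> a <= v * L -> a / L <= v.
Proof.
  intros HL H. apply (Rmult_le_reg_r L); auto. unfold Rdiv. rewrite Rmult_assoc, Rinv_l; lra.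
Qed.

Lemma le_div a v L : 0 < L -> v * L <= a -> v <= a / L.
Proof.
  intros HL H. apply (Rmult_le_reg_r L); auto. unfold Rdiv. rewrite Rmult_assoc, Rinv_l; lra.
Qed.

Theorem theorem4p6 (n : nat) (Hn : (1 <= n)%nat) :
  LDP_finite n (fun theta k => law_X1n n theta k) ln (fun k => INR k - 1).
Proof.
  split.
  { intros k Hk. unfold in_range in Hk. apply andb_prop in Hk as [H1 _].
    apply Nat.leb_le in H1. apply (le_INR 1) in H1. simpl in H1. lra. }
  intros A [k0 [Hk0 HA0]] eps Heps.
  destruct (least_nat (fun k => andb (in_range n k) (A k)) k0 k0 (le_n _)
              ltac:(cbv beta; rewrite Hk0, HA0; reflexivity)) as [m [Hm Hmin]].
  apply andb_prop in Hm as [Hmr HmA].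
  assert (Hm1 : (1 <= m <= n)%nat).
  { unfold in_range in Hmr. apply andb_prop in Hmr as [H1 H2].
    apply Nat.leb_le in H1. apply Nat.leb_le in H2. lia. }
  assert (Hinf : inf_over n (fun k => INR k - 1) A = Finite (INR m - 1)).
  { apply is_glb_Rbar_unique. split.
    - intros v [k [Hk [HAk ->]]]. simpl.
      assert (m <= k)%nat by (apply Hmin; rewrite Hk, HAk; reflexivity).
      apply le_INR in H. lra.
    - intros b Hb. apply Hb. exists m. auto. }
  rewrite Hinf.
  set (C' := INR (S n) * INR (fact n)).
  set (c := / (INR n * 2 ^ n)).
  assert (Hn1 : 1 <= INR n) by (apply (le_INR 1); lia).
  assert (Hc : 0 < c) by (apply Rinv_0_lt_compat; apply Rmult_lt_0_compat; [lra| apply pow_lt; lra]).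
  assert (HC' : 0 < C').
  { unfold C'. apply Rmult_lt_0_compat; apply lt_0_INR; [lia| apply lt_O_fact]. }
  set (B := Rabs (ln C') + Rabs (ln c)).
  set (T := Rmax (Rmax (INR n) 1) (exp (B / eps))).
  assert (Key : forall th, T < th ->
     0 < ln th /\ c <= mass n (fun k => law_X1n n th k) A * th ^ (m - 1) /\
     mass n (fun k => law_X1n n th k) A * th ^ (m - 1) <= C' /\ B < eps * ln th).
  { intros th Hth.
    assert (Hth1 : INR n <= th /\ 1 < th /\ exp (B / eps) < th).
    { unfold T in Hth.
      assert (H1 := Rmax_l (Rmax (INR n) 1) (exp (B / eps))).
      assert (H2 := Rmax_r (Rmax (INR n) 1) (exp (B / eps))).
      assert (H3 := Rmax_l (INR n) 1). assert (H4 := Rmax_r (INR n) 1). lra. }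
    destruct Hth1 as [Ht1 [Ht2 Ht3]].
    assert (Hth0 : 1 < th) by lra. assert (Ht2' : 1 <= th) by lra.
    assert (HL : 0 < ln th) by (rewrite <- ln_1; apply ln_increasing; lra).
    assert (HB : B < eps * ln th).
    { assert (B / eps < ln th).
      { rewrite <- (ln_exp (B / eps)). apply ln_increasing; auto. apply exp_pos. }
      apply (Rmult_lt_compat_l eps) in H; auto. unfold Rdiv in H.
      rewrite <- Rmult_assoc, (Rmult_comm eps B), Rmult_assoc, Rinv_r, Rmult_1_r in H; lra. }
    assert (Hlaw := fun k => law_bounds n th k Hn Ht1 Ht2').
    assert (Hnn : forall k, 0 <= (if andb (in_range n k) (A k) then law_X1n n th k else 0)).
    { intros k. destruct (andb (in_range n k) (A k)) eqn:E; [|lra].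
      apply andb_prop in E as [E1 _]. unfold in_range in E1. apply andb_prop in E1 as [E1 E2].
      apply Nat.leb_le in E1. apply Nat.leb_le in E2.
      destruct (Hlaw k ltac:(lia)) as [L1 _]. fold c in L1.
      assert (0 < th ^ (k - 1)) by (apply pow_lt; lra).
      assert (0 < law_X1n n th k * th ^ (k - 1)) by lra.
      left. apply (Rmult_lt_reg_r (th ^ (k-1))); auto. lra. }
    assert (HP : 0 < th ^ (m - 1)) by (apply pow_lt; lra).
    split; auto. split; [|split; auto].
    - unfold mass.
      assert (H := sum_ge_term _ m n Hnn ltac:(lia)). simpl in H.
      rewrite Hmr, HmA in H. simpl in H.
      destruct (Hlaw m Hm1) as [L1 _]. fold c in L1.
      apply Rle_trans with (law_X1n n th m * th ^ (m - 1)); auto.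
      apply Rmult_le_compat_r; lra.
    - unfold mass. unfold C'.
      assert (Hs : sum_f_R0 (fun k => if andb (in_range n k) (A k) then law_X1n n th k else 0) n
                   <= INR (S n) * (INR (fact n) / th ^ (m - 1))).
      { apply sum_le_const. intros k Hk.
        destruct (andb (in_range n k) (A k)) eqn:E.
        - assert (Hmk : (m <= k)%nat) by (apply Hmin; exact E).
          assert (Hpos := Hnn k). rewrite E in Hpos.
          apply andb_prop in E as [E1 _]. unfold in_range in E1. apply andb_prop in E1 as [E1 E2].
          apply Nat.leb_le in E1. apply Nat.leb_le in E2.
          destruct (Hlaw k ltac:(lia)) as [_ L2].
          assert (th ^ (m - 1) <= th ^ (k - 1)) by (apply Rle_pow; lra || lia).
          apply (Rmult_le_reg_r (th ^ (m - 1))); auto.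
          unfold Rdiv. rewrite Rmult_assoc, Rinv_l by lra. nra.
        - apply Rdiv_le_0_compat; auto. apply pos_INR. }
      apply (Rmult_le_compat_r (th ^ (m - 1))) in Hs; try lra.
      replace (INR (S n) * (INR (fact n) / th ^ (m - 1)) * th ^ (m - 1)) with (INR (S n) * INR (fact n)) in Hs
        by (field; lra).
      exact Hs. }
  assert (Hm1R : INR (m - 1) = INR m - 1) by (rewrite minus_INR by lia; simpl; ring).
  assert (HT1 : 1 <= T) by (unfold T; eapply Rle_trans; [apply Rmax_r | apply Rmax_l]).
  split.
  - exists T. intros th Hth. destruct (Key th Hth) as [HL [Lo [Up HB]]].
    set (M := mass n (fun k => law_X1n n th k) A) in *.
    assert (HP : 0 < th ^ (m - 1)) by (apply pow_lt; lra).
    assert (HM : 0 < M) by (apply (Rmult_lt_reg_r (th ^ (m - 1))); lra).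
    assert (E1 : ln (M * th ^ (m - 1)) <= ln C') by (apply ln_le; nra).
    rewrite ln_mult, ln_pow, Hm1R in E1 by lra.
    assert (ln C' <= B) by (unfold B; assert (H0 := Rle_abs (ln C')); assert (H1 := Rabs_pos (ln c)); lra).
    simpl. apply div_le; auto. nra.
  - exists T. intros th Hth. destruct (Key th Hth) as [HL [Lo [Up HB]]].
    set (M := mass n (fun k => law_X1n n th k) A) in *.
    assert (HP : 0 < th ^ (m - 1)) by (apply pow_lt; lra).
    assert (HM : 0 < M) by (apply (Rmult_lt_reg_r (th ^ (m - 1))); lra).
    assert (E1 : ln c <= ln (M * th ^ (m - 1))) by (apply ln_le; nra).
    rewrite ln_mult, ln_pow, Hm1R in E1 by lra.
    assert (- B <= ln c) by (unfold B; assert (H0 := Rle_abs (- ln c)); rewrite Rabs_Ropp in H0; assert (H1 := Rabs_pos (ln C')); lra).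
    simpl. apply le_div; auto. nra.
Qed.
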